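(* In the discrete-time load balancing system described in the context (with parameter $\epsilon>0$ and any Markovian policy), $Q_n^{(\epsilon)}(t+1)U_n^{(\epsilon)}(t)=0$ for all $n\in\{1,\dots,N\}$ and $t\ge0$. Moreover, if the chain $\{\mathbf{Q}(t)\}$ is positive recurrent and its stationary distribution has a finite first moment, then $$\mathbb{E}\big[\|\overline{\mathbf{U}}^{(\epsilon)}\|_1^2\big]\le c_1\epsilon\qquad\text{and}\qquad \mathbb{E}\big[\|\overline{\mathbf{U}}^{(\epsilon)}\|_r^r\big]\le c_r\epsilon\quad (r\in(1,\infty)),$$ where the constants $c_1,c_r$ depend only on $N$, $S_{\max}$ and $r$, not on $\epsilon$.
   Context: Model: a discrete-time system with one dispatcher and $N$ servers; server $n$ has an infinite-buffer FIFO queue of length $Q_n(t)$ at the beginning of slot $t$. Arrivals $A_\Sigma(t)$: integer valued, i.i.d. over $t$, $A_\Sigma(t)\le A_{\max}<\infty$. Service $S_n(t)$: integer valued, i.i.d. over $t$, independent across servers and of arrivals, $S_n(t)\le S_{\max}<\infty$, mean $\mu_n$; $\mu_\Sigma=\sum_n\mu_n$. In each slot the arrivals are routed to one queue by a rule depending only on $\mathbf{Q}(t)$; $A_n(t)$ is the number routed to queue $n$. Dynamics: $Q_n(t+1)=Q_n(t)+A_n(t)-S_n(t)+U_n(t)$ with unused service $U_n(t)=\max\{S_n(t)-Q_n(t)-A_n(t),0\}$. In the system with parameter $\epsilon>0$ the arrival mean is $\mu_\Sigma-\epsilon$, and superscript $(\epsilon)$ marks its quantities. $\overline{\mathbf{U}}^{(\epsilon)}$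 denotes the unused-service vector $\mathbf{U}(t)$ when $\mathbf{Q}(t)$ is distributed according to the stationary distribution. $\|\mathbf{x}\|_r=(\sum_n|x_n|^r)^{1/r}$. *)

(* Defs.v *)
From HB Require Import structures.
From mathcomp Require Import all_boot all_order all_algebra.
From mathcomp Require Import all_classical all_reals all_analysis.
Set Implicit Arguments. Unset Strict Implicit. Unset Printing Implicit Defensive.
Import Order.TTheory GRing.Theory Num.Theory.
Local Open Scope ring_scope.

(* A queue-length vector Q(t) = (Q_1(t),...,Q_N(t)), servers indexed by 'I_N. *)
Notation state N := {ffun 'I_N -> nat}.

(* A_n(t): all A_Sigma arrivals of the slot are routed to queue i. *)
Definition routed (N : nat) (i : 'I_N) (a : nat) (n : 'I_N) : nat :=
  if n == i then a else 0%N.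

(* Unused service U_n(t) = max{S_n(t) - Q_n(t) - A_n(t), 0}
   (truncated nat subtraction is exactly max{.,0}). *)
Definition unused (N : nat) (q : state N) (a : nat) (s : 'I_N -> nat)
  (i : 'I_N) (n : 'I_N) : nat :=
  (s n - (q n + routed i a n))%N.

(* Q_n(t+1) = Q_n(t) + A_n(t) - S_n(t) + U_n(t) (exact: the value is >= 0). *)
Definition next_state (N : nat) (q : state N) (a : nat) (s : 'I_N -> nat)
  (i : 'I_N) : state N :=
  [ffun n => (q n + routed i a n + unused q a s i n - s n)%N].

Definition pmf_mean (R : realType) (K : nat) (p : nat -> R) : R :=
  \sum_(k < K.+1) (k%:R * p k).

Definition is_pmf (R : realType) (K : nat) (p : nat -> R) : Prop :=
  (forall k, 0 <= p k) /\ (forall k, (K < k)%N -> p k = 0) /\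
  \sum_(k < K.+1) p k = 1.

(* The system with parameter eps:
   - pA : law of A_Sigma(t) (i.i.d. over t), supported on {0..Amax};
   - pS n : law of S_n(t) (i.i.d. over t, independent across n and of
     arrivals), supported on {0..Smax}, mean mu_n;
   - pol q i : probability that the arrivals are routed to queue i when
     Q(t) = q (a Markovian, possibly randomized, policy);
   - E[A_Sigma] = mu_Sigma - eps with eps > 0. *)
Definition lb_system (R : realType) (N Amax Smax : nat) (pA : nat -> R)
  (pS : 'I_N -> nat -> R) (pol : state N -> 'I_N -> R) (eps : R) : Prop :=
  is_pmf Amax pA /\
  (forall n, is_pmf Smax (pS n)) /\
  (forall q i, 0 <= pol q i) /\
  (forall q, \sum_(i < N) pol q i = 1) /\
  0 < eps /\
  pmf_mean Amax pA = \sum_(n < N) pmf_mean Smax (pS n) - eps.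

(* Probability of (A_Sigma = a, S = s, route = i) given Q(t) = q. *)
Definition weight (R : realType) (N Smax : nat) (pA : nat -> R)
  (pS : 'I_N -> nat -> R) (pol : state N -> 'I_N -> R) (q : state N)
  (a : nat) (s : {ffun 'I_N -> 'I_Smax.+1}) (i : 'I_N) : R :=
  pA a * (\prod_(n < N) pS n (s n)) * pol q i.

Definition kernel (R : realType) (N Amax Smax : nat) (pA : nat -> R)
  (pS : 'I_N -> nat -> R) (pol : state N -> 'I_N -> R) (q q' : state N) : R :=
  \sum_(a < Amax.+1) \sum_(s : {ffun 'I_N -> 'I_Smax.+1}) \sum_(i < N)
    weight pA pS pol q a s i *
      (next_state q a (fun n => nat_of_ord (s n)) i == q')%:R.

Definition stationary (R : realType) (N Amax Smax : nat) (pA : nat -> R)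
  (pS : 'I_N -> nat -> R) (pol : state N -> 'I_N -> R) (pi : state N -> R)
  : Prop :=
  [/\ (forall q, 0 <= pi q),
      (\esum_(q in [set: state N]) (pi q)%:E = 1)%E &
      (forall q', (pi q')%:E =
          \esum_(q in [set: state N]) (pi q * kernel Amax Smax pA pS pol q q')%:E)].

Definition finite_first_moment (R : realType) (N : nat) (pi : state N -> R)
  : Prop :=
  (\esum_(q in [set: state N]) (pi q * \sum_(n < N) (q n)%:R)%:E < +oo)%E.

(* E[f(Ubar)] where Ubar is U(t) with Q(t) ~ pi (f >= 0). *)
Definition stat_exp (R : realType) (N Amax Smax : nat) (pA : nat -> R)
  (pS : 'I_N -> nat -> R) (pol : state N -> 'I_N -> R) (pi : state N -> R)
  (f : ('I_N -> nat) -> R) : \bar R :=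
  \esum_(q in [set: state N])
    (pi q * \sum_(a < Amax.+1) \sum_(s : {ffun 'I_N -> 'I_Smax.+1}) \sum_(i < N)
       weight pA pS pol q a s i *
         f (unused q a (fun n => nat_of_ord (s n)) i))%:E.

Definition norm1_sq (R : realType) (N : nat) (u : 'I_N -> nat) : R :=
  (\sum_(n < N) (u n)%:R) ^+ 2.
Definition normr_pow (R : realType) (N : nat) (r : R) (u : 'I_N -> nat) : R :=
  \sum_(n < N) ((u n)%:R `^ r).

(* Main.v *)
Require Import Defs.
From HB Require Import structures.
From mathcomp Require Import all_boot all_order all_algebra.
From mathcomp Require Import all_classical all_reals all_analysis.
From mathcomp Require Import zify ring lra.
Import Order.TTheory GRing.Theory Num.Theory.
Local Open Scope ring_scope.

Lemma part1 (N : nat) (q : state N) a (s : 'I_N -> nat) i n :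
  ((next_state q a s i) n * unused q a s i n = 0)%N.
Proof.
rewrite /next_state ffunE /unused.
set x := routed i a n. lia.
Qed.

Lemma next_eq (N : nat) (q : state N) a (s : 'I_N -> nat) i n :
  ((next_state q a s i) n + s n = q n + routed i a n + unused q a s i n)%N.
Proof. rewrite /next_state ffunE /unused. set x := routed i a n. lia. Qed.

Lemma unused_le (N : nat) (q : state N) a (s : 'I_N -> nat) i n :
  (unused q a s i n <= s n)%N.
Proof. rewrite /unused; lia. Qed.

Lemma sum_routed (N : nat) (i : 'I_N) a : (\sum_(n < N) routed i a n = a)%N.
Proof.
rewrite (bigD1 i) //= big1 ?addn0; first by rewrite /routed eqxx.
by move=> n /negbTE; rewrite /routed => ->.
Qed.

Section Esum.
Variable R : realType.
Local Open Scope ereal_scope.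

Lemma esumZl (T : choiceType) (I : set T) (a : T -> \bar R) (c : R) :
  (0 <= c)%R -> (forall i, 0 <= a i) ->
  \esum_(i in I) (c%:E * a i) = c%:E * \esum_(i in I) a i.
Proof.
move=> c0 a0; rewrite /esum -ereal_supZl //; last first.
  by apply/set0P; exists (\sum_(x \in set0) a x); exists set0 => //; exact: fsets_set0.
rewrite image_comp /=; congr ereal_sup; apply: eq_imagel => A _ /=.
by rewrite ge0_mule_fsumr.
Qed.

Lemma esum_swap (T1 T2 : choiceType) (F : T1 -> T2 -> \bar R) :
  (forall i j, 0 <= F i j) ->
  \esum_(i in [set: T1]) \esum_(j in [set: T2]) F i j =
  \esum_(j in [set: T2]) \esum_(i in [set: T1]) F i j.
Proof.
move=> F0; rewrite esum_esum // esum_esum //.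
rewrite (reindex_esum (@setT T1 `*`` (fun=> @setT T2)) _ (fun x => (x.2, x.1)))//.
split=> //=.
- by move=> [i1 i2] [j1 j2] /= _ _ [] -> ->.
- by move=> [i1 i2] _ /=; exists (i2, i1).
Qed.

Lemma esum_single (T : choiceType) (t : T) (f : T -> \bar R) :
  0 <= f t ->
  \esum_(j in [set: T]) (if j == t then f j else 0) = f t.
Proof.
move=> f0; rewrite -[RHS](esum_set1 f0) [RHS]esum_mkcond; apply: eq_esum => j _.
by rewrite in_set1.
Qed.
End Esum.

Section Sys.
Variables (R : realType) (N Amax Smax : nat) (pA : nat -> R)
  (pS : 'I_N -> nat -> R) (pol : state N -> 'I_N -> R).
Hypothesis hA : is_pmf Amax pA.
Hypothesis hS : forall n, is_pmf Smax (pS n).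
Hypothesis hpol0 : forall q i, 0 <= pol q i.
Hypothesis hpol1 : forall q, \sum_(i < N) pol q i = 1.

Notation sv := {ffun 'I_N -> 'I_Smax.+1}.
Definition PS (s : sv) : R := \prod_(n < N) pS n (s n).

Definition E q (F : nat -> sv -> 'I_N -> R) : R :=
  \sum_(a < Amax.+1) \sum_(s : sv) \sum_(i < N) weight pA pS pol q a s i * F a s i.

Lemma E_fac q (F : nat -> R) (G : sv -> R) :
  E q (fun a s _ => F a * G s) =
  (\sum_(a < Amax.+1) pA a * F a) * (\sum_(s : sv) PS s * G s) * (\sum_(i < N) pol q i).
Proof.
rewrite /E.
transitivity (\sum_(a < Amax.+1) \sum_(s : sv) ((pA a * F a) * (PS s * G s)) * \sum_(i < N) pol q i).
  apply: eq_bigr => a _; apply: eq_bigr => s _; rewrite mulr_sumr.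
  apply: eq_bigr => i _; rewrite /weight /PS; ring.
under eq_bigr do rewrite -mulr_suml.
rewrite -mulr_suml; congr (_ * _).
rewrite mulr_suml; apply: eq_bigr => a _; by rewrite mulr_sumr.
Qed.

Lemma sumPS : \sum_(s : sv) PS s = 1.
Proof.
rewrite /PS -(bigA_distr_bigA (fun n (j : 'I_Smax.+1) => pS n j)) /= big1 // => n _.
by case: (hS n) => _ [].
Qed.

Lemma sumPSk k : \sum_(s : sv) PS s * (s k)%:R = pmf_mean Smax (pS k).
Proof.
transitivity (\sum_(s : sv) \prod_(n < N)
   (pS n (s n) * (if n == k then ((s n : nat)%:R : R) else 1))).
  apply: eq_bigr => s _; rewrite big_split /= -big_mkcond big_pred1_eq //.
rewrite -(bigA_distr_bigA (fun n (j : 'I_Smax.+1) => pS n j * (if n == k then (j : nat)%:R else 1))) /=.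
transitivity (\prod_(n < N) (if n == k then pmf_mean Smax (pS k) else 1)).
  apply: eq_bigr => n _; case: eqP => [->|_].
    by rewrite /pmf_mean; apply: eq_bigr => j _; rewrite mulrC.
  by under eq_bigr do rewrite mulr1; case: (hS n) => _ [].
by rewrite -big_mkcond big_pred1_eq.
Qed.

Lemma sumA_const c : \sum_(a < Amax.+1) pA a * c = c.
Proof. by rewrite -mulr_suml; case: hA => _ [_ ->]; rewrite mul1r. Qed.

Lemma E_const q c : E q (fun _ _ _ => c) = c.
Proof.
rewrite -[c]mulr1 (E_fac q (fun _ => c) (fun _ => 1)).
by rewrite sumA_const; under eq_bigr do rewrite mulr1; rewrite sumPS hpol1 !mulr1.
Qed.

Lemma E_A q : E q (fun a _ _ => a%:R) = pmf_mean Amax pA.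
Proof.
transitivity (E q (fun a s _ => a%:R * 1)); first by congr (E q _); apply: funext => a; apply: funext => s; apply: funext => i; rewrite mulr1.
rewrite E_fac; under [X in _ * X * _]eq_bigr do rewrite mulr1.
rewrite sumPS hpol1 !mulr1 /pmf_mean; apply: eq_bigr => a _; by rewrite mulrC.
Qed.

Lemma E_Sk q k : E q (fun _ s _ => (s k : nat)%:R) = pmf_mean Smax (pS k).
Proof.
transitivity (E q (fun a s _ => 1 * (s k : nat)%:R)); first by congr (E q _); apply: funext => a; apply: funext => s; apply: funext => i; rewrite mul1r.
by rewrite E_fac sumA_const sumPSk hpol1 mulr1 mul1r.
Qed.

Lemma E_add q F G : E q (fun a s i => F a s i + G a s i) = E q F + E q G.
Proof.
rewrite /E -big_split; apply: eq_bigr => a _; rewrite -big_split; apply: eq_bigr => s _.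
rewrite -big_split; apply: eq_bigr => i _; by rewrite mulrDr.
Qed.

Lemma E_opp q F : E q (fun a s i => - F a s i) = - E q F.
Proof.
rewrite /E -sumrN; apply: eq_bigr => a _; rewrite -sumrN; apply: eq_bigr => s _.
rewrite -sumrN; apply: eq_bigr => i _; by rewrite mulrN.
Qed.

Lemma E_sum q (F : 'I_N -> nat -> sv -> 'I_N -> R) :
  E q (fun a s i => \sum_(n < N) F n a s i) = \sum_(n < N) E q (F n).
Proof.
rewrite /E.
under eq_bigr do under eq_bigr do under eq_bigr do rewrite mulr_sumr.
under eq_bigr do under eq_bigr do rewrite exchange_big.
under eq_bigr do rewrite exchange_big.
by rewrite exchange_big.
Qed.


Lemma E_scale q c F : E q (fun a s i => c * F a s i) = c * E q F.
Proof.
rewrite /E mulr_sumr; apply: eq_bigr => a _; rewrite mulr_sumr; apply: eq_bigr => s _.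
rewrite mulr_sumr; apply: eq_bigr => i _; by rewrite mulrCA.
Qed.

Lemma weight_ge0 q a (s : sv) i : 0 <= weight pA pS pol q a s i.
Proof.
rewrite /weight; apply: mulr_ge0; last exact: hpol0.
apply: mulr_ge0; first by case: hA.
by apply: prodr_ge0 => n _; case: (hS n).
Qed.

Lemma E_ge0 q F : (forall a s i, 0 <= F a s i) -> 0 <= E q F.
Proof.
move=> F0; rewrite /E; apply: sumr_ge0 => a _; apply: sumr_ge0 => s _.
apply: sumr_ge0 => i _; apply: mulr_ge0 => //; exact: weight_ge0.
Qed.

Lemma E_le q F G : (forall a s i, F a s i <= G a s i) -> E q F <= E q G.
Proof.
move=> FG; rewrite /E; apply: ler_sum => a _; apply: ler_sum => s _.
apply: ler_sum => i _; apply: ler_wpM2l => //; exact: weight_ge0.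
Qed.

Definition Uv q a (s : sv) i := unused q a (fun n => (s n : nat)) i.
Definition nx q a (s : sv) i := next_state q a (fun n => (s n : nat)) i.
Definition msum (q : state N) : R := \sum_(n < N) (q n)%:R.
Definition gq q := E q (fun a s i => \sum_(n < N) (Uv q a s i n)%:R).
Definition hq q := E q (fun a s i => msum (nx q a s i)).

Lemma msum_ge0 q : 0 <= msum q.
Proof. by apply: sumr_ge0 => n _; rewrite ler0n. Qed.

Lemma outcome q a s i :
  \sum_(n < N) (Uv q a s i n)%:R + msum q =
  msum (nx q a s i) + (\sum_(n < N) (s n : nat)%:R + - a%:R).
Proof.
have H : (\sum_(n < N) nx q a s i n + \sum_(n < N) (s n : nat) =
          \sum_(n < N) q n + a + \sum_(n < N) Uv q a s i n)%N.
  rewrite -[X in (_ = _ + X + _)%N](@sum_routed _ i a) -!big_split; apply: eq_bigr => n _.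
  exact: next_eq.
move/(congr1 (fun x : nat => (x%:R : R))): H.
rewrite !natrD !natr_sum /msum => H; lra.
Qed.

Lemma key q eps : pmf_mean Amax pA = \sum_(n < N) pmf_mean Smax (pS n) - eps ->
  gq q + msum q = hq q + eps.
Proof.
move=> heps; rewrite /gq -(E_const q (msum q)) -E_add.
transitivity (E q (fun a s i => msum (nx q a s i) +
   (\sum_(n < N) (s n : nat)%:R + - a%:R))).
  by congr (E q _); apply: funext => a; apply: funext => s; apply: funext => i; rewrite outcome.
rewrite E_add E_add E_opp E_A -/(hq q) (E_sum q (fun n a s i => (s n : nat)%:R)).
under eq_bigr do rewrite E_Sk.
rewrite heps; ring.
Qed.

Local Open Scope ereal_scope.

Lemma kern_esum q :
  \esum_(q' in [set: state N]) (Defs.kernel Amax Smax pA pS pol q q' * msum q')%:E = (hq q)%:E.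
Proof.
transitivity (\esum_(q' in [set: state N]) \sum_(a < Amax.+1) \sum_(s : sv) \sum_(i < N)
   (weight pA pS pol q a s i * (nx q a s i == q')%:R * msum q')%:E).
  apply: eq_esum => q' _; rewrite /Defs.kernel.
  rewrite mulr_suml -sumEFin; apply: eq_bigr => a _.
  rewrite mulr_suml -sumEFin; apply: eq_bigr => s _.
  rewrite mulr_suml -sumEFin; apply: eq_bigr => i _; done.
rewrite /hq /E -sumEFin esum_sum; last first.
  move=> q' a _ _; apply: sume_ge0 => s _; apply: sume_ge0 => i _.
  rewrite lee_fin; apply: mulr_ge0; last exact: msum_ge0.
  by apply: mulr_ge0; [exact: weight_ge0|rewrite ler0n].
apply: eq_bigr => a _; rewrite -sumEFin esum_sum; last first.
  move=> q' s _ _; apply: sume_ge0 => i _.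
  rewrite lee_fin; apply: mulr_ge0; last exact: msum_ge0.
  by apply: mulr_ge0; [exact: weight_ge0|rewrite ler0n].
apply: eq_bigr => s _; rewrite -sumEFin esum_sum; last first.
  move=> q' i _ _.
  rewrite lee_fin; apply: mulr_ge0; last exact: msum_ge0.
  by apply: mulr_ge0; [exact: weight_ge0|rewrite ler0n].
apply: eq_bigr => i _.
transitivity (\esum_(q' in [set: state N])
   (if q' == nx q a s i then (weight pA pS pol q a s i * msum q')%:E else 0)).
  apply: eq_esum => q' _; rewrite eq_sym; case: eqP => [->|_].
    by rewrite mulr1.
  by rewrite mulr0 mul0r.
rewrite esum_single //; rewrite lee_fin; apply: mulr_ge0; [exact: weight_ge0|exact: msum_ge0].
Qed.


Lemma gq_ge0 q : (0 <= gq q)%R.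
Proof. apply: E_ge0 => a s i; apply: sumr_ge0 => n _; by rewrite ler0n. Qed.

Lemma hq_ge0 q : (0 <= hq q)%R.
Proof. apply: E_ge0 => a s i; exact: msum_ge0. Qed.

Lemma kernel_ge0 q q' : (0 <= Defs.kernel Amax Smax pA pS pol q q')%R.
Proof.
apply: sumr_ge0 => a _; apply: sumr_ge0 => s _; apply: sumr_ge0 => i _.
by apply: mulr_ge0; [exact: weight_ge0|rewrite ler0n].
Qed.

Lemma drift eps pi : (0 < eps)%R -> pmf_mean Amax pA = (\sum_(n < N) pmf_mean Smax (pS n) - eps)%R ->
  stationary Amax Smax pA pS pol pi -> finite_first_moment pi ->
  \esum_(q in [set: state N]) (pi q * gq q)%:E = eps%:E.
Proof.
move=> eps0 heps [pi0 pi1 pist] hfin.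
have hm : \esum_(q in [set: state N]) (pi q * msum q)%:E =
          \esum_(q in [set: state N]) (pi q * hq q)%:E.
  transitivity (\esum_(q' in [set: state N]) (msum q')%:E *
       \esum_(q in [set: state N]) (pi q * Defs.kernel Amax Smax pA pS pol q q')%:E).
    by apply: eq_esum => q' _; rewrite -pist EFinM muleC.
  transitivity (\esum_(q' in [set: state N]) \esum_(q in [set: state N])
       (msum q' * (pi q * Defs.kernel Amax Smax pA pS pol q q'))%:E).
    apply: eq_esum => q' _; rewrite -esumZl //; first exact: msum_ge0.
    by move=> q; rewrite lee_fin; apply: mulr_ge0 => //; exact: kernel_ge0.
  rewrite esum_swap; last first.
    move=> q' q; rewrite lee_fin; apply: mulr_ge0; first exact: msum_ge0.
    by apply: mulr_ge0 => //; exact: kernel_ge0.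
  apply: eq_esum => q _.
  transitivity ((pi q)%:E * \esum_(q' in [set: state N])
        (Defs.kernel Amax Smax pA pS pol q q' * msum q')%:E).
    rewrite -esumZl //; last first.
      by move=> q'; rewrite lee_fin; apply: mulr_ge0; [exact: kernel_ge0|exact: msum_ge0].
    by apply: eq_esum => q' _; rewrite -EFinM; congr EFin; ring.
  by rewrite kern_esum EFinM.
have hfinm : \esum_(q in [set: state N]) (pi q * msum q)%:E \is a fin_num.
  rewrite ge0_fin_numE //; apply: esum_ge0 => q _; rewrite lee_fin.
  by apply: mulr_ge0 => //; exact: msum_ge0.
have hsum : \esum_(q in [set: state N]) ((pi q * gq q)%:E + (pi q * msum q)%:E) =
            \esum_(q in [set: state N]) ((pi q * hq q)%:E + (eps%:E * (pi q)%:E)).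
  apply: eq_esum => q _; rewrite -EFinM -!EFinD; congr EFin.
  by rewrite -mulrDr (key q eps heps) mulrDr (mulrC eps).
rewrite esumD in hsum; last 2 first.
- by move=> q _; rewrite lee_fin; apply: mulr_ge0 => //; exact: gq_ge0.
- by move=> q _; rewrite lee_fin; apply: mulr_ge0 => //; exact: msum_ge0.
rewrite esumD in hsum; last 2 first.
- by move=> q _; rewrite lee_fin; apply: mulr_ge0 => //; exact: hq_ge0.
- by move=> q _; rewrite -EFinM lee_fin; apply: mulr_ge0 => //; rewrite ltW //.
rewrite -hm esumZl // in hsum; last by rewrite ltW //.
rewrite pi1 mule1 in hsum.
have := congr1 (fun x => x - \esum_(q in [set: state N]) (pi q * msum q)%:E) hsum.
by rewrite addeK // addeC addeK.
Qed.


Lemma bound eps pi (f : ('I_N -> nat) -> R) (C : R) : (0 < eps)%R ->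
  pmf_mean Amax pA = (\sum_(n < N) pmf_mean Smax (pS n) - eps)%R ->
  stationary Amax Smax pA pS pol pi -> finite_first_moment pi -> (0 <= C)%R ->
  (forall u : 'I_N -> nat, (forall n, (u n <= Smax)%N) -> (f u <= C * \sum_(n < N) (u n)%:R)%R) ->
  stat_exp Amax Smax pA pS pol pi f <= (C * eps)%:E.
Proof.
move=> eps0 heps hst hfin C0 hf.
have pi0 : forall q, (0 <= pi q)%R by case: hst.
rewrite EFinM -(drift eps pi eps0 heps hst hfin) -esumZl //; last first.
  by move=> q; rewrite lee_fin; apply: mulr_ge0 => //; exact: gq_ge0.
apply: le_esum => q _; rewrite -EFinM lee_fin mulrCA; apply: ler_wpM2l => //.
rewrite /gq -E_scale.
apply: (E_le q (fun a s i => f (Uv q a s i))) => a s i; apply: hf => n.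
apply: leq_trans (unused_le _ _ _ _ _ _) _.
by rewrite -ltnS ltn_ord.
Qed.

End Sys.
Lemma sum_le (R : realType) (N Smax : nat) (u : 'I_N -> nat) :
  (forall n, (u n <= Smax)%N) -> \sum_(n < N) ((u n)%:R : R) <= N%:R * Smax%:R.
Proof.
move=> hu; apply: le_trans (_ : \sum_(n < N) (Smax%:R : R) <= _).
  by apply: ler_sum => n _; rewrite ler_nat.
by rewrite sumr_const card_ord mulr_natl.
Qed.

Lemma pow_le (R : realType) (Smax : nat) (r : R) (x : nat) : 1 < r -> (x <= Smax)%N ->
  (x%:R : R) `^ r <= Smax%:R `^ (r - 1) * x%:R.
Proof.
move=> r1 xS; case: x xS => [|x] xS.
  by rewrite powR0 ?mulr0 //; apply/negP => /eqP r0; rewrite r0 in r1; lra.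
have -> : r = (r - 1) + 1 by ring.
rewrite powRD; last by apply/implyP => _; rewrite pnatr_eq0.
rewrite addrK powRr1 ?ler0n //; apply: ler_wpM2r; first by rewrite ler0n.
apply: ge0_ler_powR; rewrite ?nnegrE ?ler0n //; first lra.
by rewrite ler_nat.
Qed.

Theorem lemma2 (R : realType) (N Smax : nat) :
  (forall (Q : nat -> state N) (A : nat -> nat) (Sv : nat -> 'I_N -> nat)
          (route : nat -> 'I_N),
     (forall t, Q t.+1 = next_state (Q t) (A t) (Sv t) (route t)) ->
     forall (t : nat) (n : 'I_N),
       ((Q t.+1) n * unused (Q t) (A t) (Sv t) (route t) n = 0)%N)
  /\
  (exists c1 : R, forall (Amax : nat) (pA : nat -> R) (pS : 'I_N -> nat -> R)
       (pol : state N -> 'I_N -> R) (eps : R) (pi : state N -> R),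
     lb_system Amax Smax pA pS pol eps ->
     stationary Amax Smax pA pS pol pi ->
     finite_first_moment pi ->
     (stat_exp Amax Smax pA pS pol pi (@norm1_sq R N) <= (c1 * eps)%:E)%E)
  /\
  (forall r : R, 1 < r ->
   exists cr : R, forall (Amax : nat) (pA : nat -> R) (pS : 'I_N -> nat -> R)
       (pol : state N -> 'I_N -> R) (eps : R) (pi : state N -> R),
     lb_system Amax Smax pA pS pol eps ->
     stationary Amax Smax pA pS pol pi ->
     finite_first_moment pi ->
     (stat_exp Amax Smax pA pS pol pi (normr_pow r) <= (cr * eps)%:E)%E).
Proof.
split.
  move=> Q A Sv route hQ t n; rewrite hQ; exact: part1.
split.
  exists (N%:R * Smax%:R) => Amax pA pS pol eps pi [hA [hS [hp0 [hp1 [e0 hm]]]]] hst hfin.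
  apply: (@bound _ _ _ _ _ _ _ hA hS hp0 hp1 _ _ _ _ e0 hm hst hfin).
    by rewrite mulr_ge0 ?ler0n.
  move=> u hu; rewrite /norm1_sq expr2; apply: ler_wpM2r.
    by apply: sumr_ge0 => n _; rewrite ler0n.
  exact: sum_le.
move=> r r1.
exists (Smax%:R `^ (r - 1)) => Amax pA pS pol eps pi [hA [hS [hp0 [hp1 [e0 hm]]]]] hst hfin.
apply: (@bound _ _ _ _ _ _ _ hA hS hp0 hp1 _ _ _ _ e0 hm hst hfin); first exact: powR_ge0.
move=> u hu; rewrite /normr_pow mulr_sumr; apply: ler_sum => n _.
exact: pow_le.
Qed.
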